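(* Let $f:\mathbb R^n\to\mathbb R$ be a metric function. Then every gradient line of $f$ (i.e. every non-stationary trajectory of $\dot x=\operatorname{grad} f(x)$) has curvature identically zero; that is, it lies on a straight line.
   Context: A metric function on a manifold $M$ is a function $f\in C^2(M,\mathbb R)$ such that the length of its gradient $|\operatorname{grad} f|$ is constant on each connected component of each level set of $f$. A gradient line of $f$ is a trajectory of the system $\dot x=\operatorname{grad}f(x)$. *)

(* Defs.v *)
From Stdlib Require Import Reals.
From mathcomp Require Import ssreflect ssrfun ssrbool eqtype ssrnat fintype bigop.
Open Scope R_scope.

Definition vec (n : nat) := 'I_n -> R.

Definition vadd {n} (x y : vec n) : vec n := fun i => x i + y i.
Definition vsub {n} (x y : vec n) : vec n := fun i => x i - y i.
Definition dot {n} (x y : vec n) : R := \big[Rplus/0]_(i < n) (x i * y i).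
Definition vnorm {n} (x : vec n) : R := sqrt (dot x x).

Definition has_grad {n} (f : vec n -> R) (g : vec n) (x : vec n) : Prop :=
  forall eps, 0 < eps -> exists delta, 0 < delta /\
    forall h : vec n, vnorm h < delta ->
      Rabs (f (vadd x h) - f x - dot g h) <= eps * vnorm h.

Definition vcontinuous {n} (F : vec n -> vec n) : Prop :=
  forall x eps, 0 < eps -> exists delta, 0 < delta /\
    forall y, vnorm (vsub y x) < delta -> vnorm (vsub (F y) (F x)) < eps.

Definition C1_with_grad {n} (f : vec n -> R) (G : vec n -> vec n) : Prop :=
  (forall x, has_grad f (G x) x) /\ vcontinuous G.

Definition C2_with_grad {n} (f : vec n -> R) (G : vec n -> vec n) : Prop :=
  (forall x, has_grad f (G x) x) /\
  (forall i : 'I_n, exists H : vec n -> vec n, C1_with_grad (fun x => G x i) H).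

Definition vopen {n} (U : vec n -> Prop) : Prop :=
  forall x, U x -> exists r, 0 < r /\ forall y, vnorm (vsub y x) < r -> U y.

Definition vconnected {n} (C : vec n -> Prop) : Prop :=
  ~ exists U V : vec n -> Prop,
      vopen U /\ vopen V /\
      (forall x, C x -> U x \/ V x) /\
      (forall x, C x -> U x -> V x -> False) /\
      (exists x, C x /\ U x) /\ (exists x, C x /\ V x).

Definition same_component {n} (S : vec n -> Prop) (x y : vec n) : Prop :=
  exists C : vec n -> Prop, vconnected C /\ (forall z, C z -> S z) /\ C x /\ C y.

Definition metric_function {n} (f : vec n -> R) (G : vec n -> vec n) : Prop :=
  C2_with_grad f G /\
  forall x y, same_component (fun z => f z = f x) x y -> vnorm (G x) = vnorm (G y).

(* Open interval (lo, hi) with possibly infinite endpoints (None). *)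
Definition in_interval (lo hi : option R) (t : R) : Prop :=
  match lo with Some a => a < t | None => True end /\
  match hi with Some b => t < b | None => True end.

Definition nonempty_interval (lo hi : option R) : Prop :=
  match lo, hi with Some a, Some b => a < b | _, _ => True end.

Definition is_gradient_line {n} (G : vec n -> vec n) (lo hi : option R)
  (gamma : R -> vec n) : Prop :=
  forall t, in_interval lo hi t ->
    forall i : 'I_n, derivable_pt_lim (fun s => gamma s i) t (G (gamma t) i).

(* Main.v *)
Require Import Defs.
From HB Require Import structures.
From Stdlib Require Import Reals Lra Classical ClassicalEpsilon FunctionalExtensionality.
From mathcomp Require Import ssreflect ssrfun ssrbool eqtype ssrnat seq fintype bigop.
Open Scope R_scope.
Set Implicit Arguments.
Unset Strict Implicit.

HB.instance Definition _ := Monoid.isComLaw.Build R 0 Rplus (fun a b c => esym (Rplus_assoc a b c)) Rplus_comm Rplus_0_l.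

Lemma rsum_le n (F1 F2 : 'I_n -> R) : (forall i, F1 i <= F2 i) ->
  \big[Rplus/0]_(i < n) F1 i <= \big[Rplus/0]_(i < n) F2 i.
Proof. move=> H; apply: (big_ind2 Rle) => //; [lra | move=> *; lra]. Qed.

Lemma rsum_scal n c (F : 'I_n -> R) :
  \big[Rplus/0]_(i < n) (c * F i) = c * \big[Rplus/0]_(i < n) F i.
Proof.
apply: (big_ind2 (fun a b => a = c * b)); [ring| move=> ? ? ? ? -> ->; ring | by []].
Qed.

Lemma rsum_plus n (F1 F2 : 'I_n -> R) :
  \big[Rplus/0]_(i < n) (F1 i + F2 i) = \big[Rplus/0]_(i < n) F1 i + \big[Rplus/0]_(i < n) F2 i.
Proof. by rewrite big_split. Qed.

Lemma rsum_abs n (F : 'I_n -> R) :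
  Rabs (\big[Rplus/0]_(i < n) F i) <= \big[Rplus/0]_(i < n) Rabs (F i).
Proof.
apply: (big_ind2 (fun a b => Rabs a <= b)).
- rewrite Rabs_R0; lra.
- move=> a1 a2 b1 b2 H1 H2; apply: Rle_trans (Rabs_triang _ _) _; lra.
- move=> i _; lra.
Qed.

Lemma rsum_ge0 n (F : 'I_n -> R) : (forall i, 0 <= F i) -> 0 <= \big[Rplus/0]_(i < n) F i.
Proof. move=> H; apply: (big_ind (fun a => 0 <= a)) => //; [lra| move=> *; lra]. Qed.

Lemma rsum_single n (F : 'I_n -> R) j : (forall i, 0 <= F i) -> F j <= \big[Rplus/0]_(i < n) F i.
Proof.
move=> H; rewrite (bigD1 j) //=.
rewrite -{1}(Rplus_0_r (F j)); apply: Rplus_le_compat_l.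
apply: (big_ind (fun a => 0 <= a)) => //; [lra| move=> *; lra].
Qed.

Lemma rsum_zero n (F : 'I_n -> R) : (forall i, F i = 0) -> \big[Rplus/0]_(i < n) F i = 0.
Proof. move=> H; apply: big1 => i _; exact: H. Qed.

Lemma rsum_nat_const n c : \big[Rplus/0]_(i < n) c = INR n * c.
Proof.
elim: n => [|n IH]; first by rewrite big_ord0 /=; ring.
rewrite big_ord_recr IH S_INR /=. lra.
Qed.

Lemma dot_comm n (x y : vec n) : dot x y = dot y x.
Proof. rewrite /dot; apply: eq_bigr => i _; ring. Qed.

Lemma dot_lin n (g a b : vec n) al be :
  dot g (fun i => al * a i + be * b i) = al * dot g a + be * dot g b.
Proof.
rewrite /dot -!rsum_scal -rsum_plus; apply: eq_bigr => i _; ring.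
Qed.

Lemma dot_ge0 n (x : vec n) : 0 <= dot x x.
Proof. apply: rsum_ge0 => i; nra. Qed.

Lemma coord_sq_le n (x : vec n) i : x i * x i <= dot x x.
Proof. rewrite /dot. apply: (@rsum_single n (fun i => x i * x i)) => j; nra. Qed.

Lemma coord_le_norm n (x : vec n) i : Rabs (x i) <= vnorm x.
Proof.
rewrite /vnorm -(sqrt_Rsqr (Rabs (x i))); last exact: Rabs_pos.
apply: sqrt_le_1_alt. rewrite /Rsqr -Rabs_mult Rabs_right; last nra.
exact: coord_sq_le.
Qed.

Lemma dot_zero_coord n (x : vec n) i : dot x x = 0 -> x i = 0.
Proof. move=> H; have := coord_sq_le x i; rewrite H; nra. Qed.

Lemma vnorm_ge0 n (x : vec n) : 0 <= vnorm x.
Proof. exact: sqrt_pos. Qed.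

Definition sabs {n} (g : vec n) := \big[Rplus/0]_(i < n) Rabs (g i).

Lemma sabs_ge0 n (g : vec n) : 0 <= sabs g.
Proof. apply: rsum_ge0 => i; exact: Rabs_pos. Qed.

Lemma dot_bound n (g v : vec n) a : (forall i, Rabs (v i) <= a) -> Rabs (dot g v) <= sabs g * a.
Proof.
move=> H; apply: Rle_trans (rsum_abs _) _.
rewrite /sabs -(Rmult_comm a) -rsum_scal; apply: rsum_le => i.
rewrite Rabs_mult (Rmult_comm a); apply: Rmult_le_compat_l; [exact: Rabs_pos | exact: H].
Qed.

Lemma vnorm_coord_bound n (v : vec n) a : (forall i, Rabs (v i) <= a) -> vnorm v <= INR n * a.
Proof.
move=> H; case: n v H => [|n] v H.
  rewrite /vnorm /dot big_ord0 sqrt_0 /=; lra.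
have a0 : 0 <= a by apply: Rle_trans (Rabs_pos _) (H ord0).
rewrite /vnorm -(sqrt_Rsqr (INR n.+1 * a)); last by apply: Rmult_le_pos => //; exact: pos_INR.
apply: sqrt_le_1_alt.
apply: Rle_trans (rsum_le (F2 := fun _ => a * a) _) _.
  move=> i; have Hi := H i; have Hp := Rabs_pos (v i).
  have E : v i * v i = Rabs (v i) * Rabs (v i).
    by rewrite -Rabs_mult Rabs_right //; nra.
  rewrite E; nra.
rewrite rsum_nat_const /Rsqr.
have h1 : 1 <= INR n.+1 by rewrite S_INR; have := pos_INR n; lra.
nra.
Qed.


Lemma fin_delta n (A : Type) (d : A -> R) (Q : 'I_n -> A -> Prop) :
  (forall i, exists del, 0 < del /\ forall y, d y < del -> Q i y) ->
  exists del, 0 < del /\ forall i y, d y < del -> Q i y.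
Proof.
move=> H.
suff [del [Hd Hl]] : exists del, 0 < del /\ forall i, i \in enum 'I_n -> forall y, d y < del -> Q i y.
  exists del; split => // i y; apply: Hl; by rewrite mem_enum.
elim: (enum 'I_n) => [|i l [dl [Hdl Hl]]].
  by exists 1; split => //; lra.
have [di [Hdi Hi]] := H i.
exists (Rmin di dl); split; first exact: Rmin_glb_lt.
move=> j; rewrite in_cons => /orP [/eqP -> | Hj] y Hy.
  apply: Hi; apply: Rlt_le_trans Hy (Rmin_l _ _).
apply: Hl => //; apply: Rlt_le_trans Hy (Rmin_r _ _).
Qed.

Lemma Rabs_div a b : b <> 0 -> Rabs (a / b) = Rabs a / Rabs b.
Proof. move=> _; by rewrite /Rdiv Rabs_mult Rabs_inv. Qed.

Lemma vsub_vadd n (x y : vec n) : vadd x (vsub y x) = y.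
Proof. apply: functional_extensionality => i; rewrite /vadd /vsub; ring. Qed.

Lemma chain n (phi : vec n -> R) (g : vec n) (c : R -> vec n) (d : vec n) t0 :
  has_grad phi g (c t0) ->
  (forall k, derivable_pt_lim (fun s => c s k) t0 (d k)) ->
  derivable_pt_lim (fun s => phi (c s)) t0 (dot g d).
Proof.
move=> Hg Hc eps Heps.
set Sg := sabs g. set Sd := sabs d.
have Sg0 : 0 <= Sg := sabs_ge0 g. have Sd0 : 0 <= Sd := sabs_ge0 d.
have n0 := pos_INR n.
set e1 := eps / (2 * (INR n * (Sd + 1) + 1)).
have e1p : 0 < e1 by rewrite /e1; apply: Rdiv_lt_0_compat => //; nra.
have [d1 [Hd1 H1]] := Hg e1 e1p.
set e2 := Rmin 1 (eps / (2 * (Sg + 1))).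
have e2p : 0 < e2 by apply: Rmin_glb_lt; [lra | apply: Rdiv_lt_0_compat => //; lra].
have Hfd : forall k : 'I_n, exists del, 0 < del /\ forall h, Rabs h < del ->
    h <> 0 -> Rabs ((c (t0 + h) k - c t0 k) / h - d k) < e2.
  move=> k; have [del Hdel] := Hc k e2 e2p; exists del; split; first exact: cond_pos.
  move=> h Hh Hh0; exact: Hdel.
have [d2 [Hd2 H2]] := @fin_delta n R (fun h => Rabs h)
  (fun k h => h <> 0 -> Rabs ((c (t0 + h) k - c t0 k) / h - d k) < e2) Hfd.
set del := Rmin d2 (d1 / (INR n * (Sd + 1) + 1)).
have delp : 0 < del by apply: Rmin_glb_lt => //; apply: Rdiv_lt_0_compat => //; nra.
exists (mkposreal del delp) => h Hh0 /= Hh.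
have Hhd2 : Rabs h < d2 := Rlt_le_trans _ _ _ Hh (Rmin_l _ _).
have Hhd1 : Rabs h < d1 / (INR n * (Sd + 1) + 1) := Rlt_le_trans _ _ _ Hh (Rmin_r _ _).
have ha : 0 < Rabs h by apply: Rabs_pos_lt.
set k := vsub (c (t0 + h)) (c t0).
have Hk : forall i, Rabs (k i - h * d i) <= e2 * Rabs h.
  move=> i; have := H2 i h Hhd2 Hh0.
  have -> : (c (t0 + h) i - c t0 i) / h - d i = (k i - h * d i) / h by rewrite /k /vsub; field.
  rewrite Rabs_div // => Hq.
  apply: Rlt_le; apply: (Rmult_lt_reg_r (/ Rabs h)); first exact: Rinv_0_lt_compat.
  rewrite Rmult_assoc Rinv_r; last lra. rewrite Rmult_1_r //.
have Hk2 : forall i, Rabs (k i) <= (Sd + 1) * Rabs h.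
  move=> i; have := Hk i; have := Rabs_triang (k i - h * d i) (h * d i).
  have -> : k i - h * d i + h * d i = k i by ring.
  rewrite Rabs_mult.
  have : Rabs (d i) <= Sd by apply: (@rsum_single n (fun i => Rabs (d i))) => j; exact: Rabs_pos.
  have : e2 <= 1 := Rmin_l _ _.
  have := Rabs_pos (d i). nra.
have Hnk : vnorm k <= INR n * ((Sd + 1) * Rabs h) := vnorm_coord_bound Hk2.
have Hnk1 : vnorm k < d1.
  apply: Rle_lt_trans Hnk _.
  have := Rmult_lt_compat_r (INR n * (Sd + 1) + 1) _ _ ltac:(nra) Hhd1.
  rewrite /Rdiv Rmult_assoc Rinv_l; last nra. nra.
have Hf := H1 k Hnk1. rewrite vsub_vadd in Hf.
have Hdk : Rabs (dot g (fun i => k i - h * d i)) <= Sg * (e2 * Rabs h) := dot_bound g Hk.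
have Edk : dot g (fun i => k i - h * d i) = dot g k - h * dot g d.
  have -> : dot g k - h * dot g d = 1 * dot g k + (- h) * dot g d by ring.
  rewrite -(dot_lin g k d 1 (- h)). rewrite /dot; apply: eq_bigr => i _; ring.
rewrite Edk in Hdk.
have -> : (phi (c (t0 + h)) - phi (c t0)) / h - dot g d =
   ((phi (c (t0 + h)) - phi (c t0) - dot g k) + (dot g k - h * dot g d)) / h by field.
rewrite Rabs_div //.
apply: (Rmult_lt_reg_r (Rabs h)) => //.
rewrite /Rdiv Rmult_assoc Rinv_l; last lra. rewrite Rmult_1_r.
apply: Rle_lt_trans (Rabs_triang _ _) _.
have E1 : e1 * vnorm k <= e1 * (INR n * ((Sd + 1) * Rabs h)) by apply: Rmult_le_compat_l; lra.
have E1' : e1 * (INR n * ((Sd + 1) * Rabs h)) < eps / 2 * Rabs h.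
  rewrite /e1.
  have -> : eps / (2 * (INR n * (Sd + 1) + 1)) * (INR n * ((Sd + 1) * Rabs h)) =
     eps / 2 * Rabs h * ((INR n * (Sd + 1)) / (INR n * (Sd + 1) + 1)) by field; nra.
  have : (INR n * (Sd + 1)) / (INR n * (Sd + 1) + 1) < 1.
    apply: (Rmult_lt_reg_r (INR n * (Sd + 1) + 1)); first nra.
    rewrite /Rdiv Rmult_assoc Rinv_l; nra.
  have : 0 < eps / 2 * Rabs h by nra.
  nra.
have E2 : Sg * (e2 * Rabs h) <= eps / 2 * Rabs h.
  have : e2 <= eps / (2 * (Sg + 1)) := Rmin_r _ _.
  have : Sg * (eps / (2 * (Sg + 1))) <= eps / 2.
    apply: (Rmult_le_reg_r (2 * (Sg + 1))); first lra.
    have -> : Sg * (eps / (2 * (Sg + 1))) * (2 * (Sg + 1)) = Sg * eps by field; lra.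
    nra.
  move=> H3 H4. have : Sg * e2 <= eps / 2 by nra. nra.
lra.
Qed.

Lemma deriv_sum_list (I : eqType) (r : seq I) (F : I -> R -> R) (dF : I -> R) t :
  (forall i, derivable_pt_lim (F i) t (dF i)) ->
  derivable_pt_lim (fun s => \big[Rplus/0]_(i <- r) F i s) t (\big[Rplus/0]_(i <- r) dF i).
Proof.
move=> H; elim: r => [|i r IH].
  rewrite big_nil. have := derivable_pt_lim_const 0 t.
  apply: (derivable_pt_lim_ext _ _ _ _) => s /=. by rewrite big_nil.
rewrite big_cons.
have := derivable_pt_lim_plus _ _ t _ _ (H i) IH.
apply: derivable_pt_lim_ext => s /=. by rewrite big_cons.
Qed.


Lemma conn_core a b (S : R -> Prop) : a <= b -> S a ->
  (forall t, a <= t <= b -> S t -> exists e, 0 < e /\ forall s, a <= s <= b -> Rabs (s - t) < e -> S s) ->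
  (forall t, a <= t <= b -> ~ S t -> exists e, 0 < e /\ forall s, a <= s <= b -> Rabs (s - t) < e -> ~ S s) ->
  S b.
Proof.
move=> hab Sa Hop Hcl.
pose E x := a <= x <= b /\ forall y, a <= y <= x -> S y.
have Ea : E a.
  split; first lra. move=> y Hy; have -> : y = a by lra. done.
have bE : bound E by exists b => x [[]].
have [m [Hub Hlub]] := @completeness E bE (ex_intro _ a Ea).
have ma : a <= m by apply: Hub.
have mb : m <= b by apply: Hlub => x [[]].
have approx : forall e, 0 < e -> exists x, E x /\ m - e < x.
  move=> e He; apply: NNPP => Hn.
  have : m <= m - e; last lra.
  apply: Hlub => x Ex; apply: Rnot_lt_le => Hx; apply: Hn; exists x; done.
have Hm : S m.
  apply: NNPP => Hnm.
  have [e [He He']] := Hcl m (conj ma mb) Hnm.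
  have [x [[Hx1 Hx2] Hx3]] := approx e He.
  have xm : x <= m by apply: Hub; split.
  apply: (He' x); [lra | rewrite Rabs_left1; lra | apply: Hx2; lra].
case: (Req_dec m b) => [<- //| mb'].
have [e [He He']] := Hop m (conj ma mb) Hm.
have [x [[Hx1 Hx2] Hx3]] := approx e He.
have xm : x <= m by apply: Hub; split.
set z := Rmin (m + e / 2) b.
have zm : m < z by apply: Rmin_glb_lt; lra.
have : z <= m; last lra.
apply: Hub; split; first (split; [lra | exact: Rmin_r]).
move=> y Hy.
case: (Rle_lt_dec y x) => Hyx; first by apply: Hx2; lra.
apply: He'; first (split; [lra | apply: Rle_trans (proj2 Hy) (Rmin_r _ _)]).
have : z <= m + e / 2 := Rmin_l _ _.
move=> ?; apply: Rabs_def1; lra.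
Qed.

Lemma in_interval_convex lo hi a b t :
  in_interval lo hi a -> in_interval lo hi b -> a <= t <= b -> in_interval lo hi t.
Proof.
case: lo => [l|]; case: hi => [h|] /=; rewrite /in_interval; intuition lra.
Qed.

Lemma interval_conn lo hi (S : R -> Prop) t0 : in_interval lo hi t0 -> S t0 ->
  (forall t, in_interval lo hi t -> S t -> exists e, 0 < e /\ forall s, in_interval lo hi s -> Rabs (s - t) < e -> S s) ->
  (forall t, in_interval lo hi t -> ~ S t -> exists e, 0 < e /\ forall s, in_interval lo hi s -> Rabs (s - t) < e -> ~ S s) ->
  forall t, in_interval lo hi t -> S t.
Proof.
move=> I0 S0 Hop Hcl t It.
case: (Rle_lt_dec t0 t) => Ht.
  apply: (@conn_core t0 t S Ht S0).
  - move=> u Hu Su; have Iu := in_interval_convex I0 It Hu.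
    have [e [He H]] := Hop u Iu Su; exists e; split => // s Hs; apply: H.
    exact: in_interval_convex I0 It Hs.
  - move=> u Hu Su; have Iu := in_interval_convex I0 It Hu.
    have [e [He H]] := Hcl u Iu Su; exists e; split => // s Hs; apply: H.
    exact: in_interval_convex I0 It Hs.
have := @conn_core (- t0) (- t) (fun x => S (- x)) ltac:(lra) ltac:(by rewrite /= Ropp_involutive).
rewrite Ropp_involutive; apply.
- move=> u Hu Su; have Iu : in_interval lo hi (- u) by apply: (in_interval_convex It I0); lra.
  have [e [He H]] := Hop (- u) Iu Su; exists e; split => // s Hs Hse; apply: H.
    apply: (in_interval_convex It I0); lra.
  by rewrite -Rabs_Ropp; have -> : - (- s - - u) = s - u by ring.
- move=> u Hu Su; have Iu : in_interval lo hi (- u) by apply: (in_interval_convex It I0); lra.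
  have [e [He H]] := Hcl (- u) Iu Su; exists e; split => // s Hs Hse; apply: H.
    apply: (in_interval_convex It I0); lra.
  by rewrite -Rabs_Ropp; have -> : - (- s - - u) = s - u by ring.
Qed.


Lemma rsum_sub n (F1 F2 : 'I_n -> R) :
  \big[Rplus/0]_(i < n) (F1 i - F2 i) = \big[Rplus/0]_(i < n) F1 i - \big[Rplus/0]_(i < n) F2 i.
Proof.
have -> : \big[Rplus/0]_(i < n) F1 i - \big[Rplus/0]_(i < n) F2 i =
   \big[Rplus/0]_(i < n) F1 i + (-1) * \big[Rplus/0]_(i < n) F2 i by ring.
rewrite -rsum_scal -rsum_plus; apply: eq_bigr => i _; ring.
Qed.

Lemma dot_vsub_le n (a b q : vec n) e : vnorm (vsub a b) < e ->
  Rabs (dot a q - dot b q) <= sabs q * e.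
Proof.
move=> H.
have -> : dot a q - dot b q = dot q (vsub a b).
  rewrite /dot -rsum_sub; apply: eq_bigr => i _; rewrite /vsub; ring.
apply: dot_bound => i; apply: Rlt_le; apply: Rle_lt_trans (coord_le_norm _ i) H.
Qed.

Definition pt {n} (x p q : vec n) (s t : R) : vec n := fun k => x k + s * p k + t * q k.

Lemma d_pt_s n (x p q : vec n) t s k : derivable_pt_lim (fun s => pt x p q s t k) s (p k).
Proof.
rewrite /pt.
have := derivable_pt_lim_plus _ _ s _ _
  (derivable_pt_lim_plus _ _ s _ _ (derivable_pt_lim_const (x k) s)
     (derivable_pt_lim_scal _ (p k) s _ (derivable_pt_lim_id s)))
  (derivable_pt_lim_const (t * q k) s).
have -> : 0 + p k * 1 + 0 = p k by ring.
apply: derivable_pt_lim_ext => u; rewrite /plus_fct /fct_cte /mult_real_fct; unfold Ranalysis1.id; ring.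
Qed.

Lemma d_pt_t n (x p q : vec n) s t k : derivable_pt_lim (fun t => pt x p q s t k) t (q k).
Proof.
rewrite /pt.
have := derivable_pt_lim_plus _ _ t _ _
  (derivable_pt_lim_const (x k + s * p k) t)
     (derivable_pt_lim_scal _ (q k) t _ (derivable_pt_lim_id t)).
have -> : 0 + q k * 1 = q k by ring.
apply: derivable_pt_lim_ext => u; rewrite /plus_fct /fct_cte /mult_real_fct; unfold Ranalysis1.id; ring.
Qed.

Definition Dq {n} (f : vec n -> R) x p q t :=
  f (pt x p q t t) - f (pt x p q t 0) - f (pt x p q 0 t) + f (pt x p q 0 0).

Definition Lh {n} (Hs : 'I_n -> vec n -> vec n) x (p q : vec n) :=
  \big[Rplus/0]_(i < n) (p i * dot (Hs i x) q).

Lemma schwarz_lim n (f : vec n -> R) G Hs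
  (HfG : forall x, has_grad f (G x) x)
  (HH : forall i, C1_with_grad (fun x => G x i) (Hs i)) x p q eps :
  0 < eps -> exists del, 0 < del /\ forall t, 0 < t < del ->
   Rabs (Dq f x p q t - t * t * Lh Hs x p q) <= eps * (t * t).
Proof.
move=> Heps.
set Sp := sabs p. set Sq := sabs q.
have Sp0 : 0 <= Sp := sabs_ge0 p. have Sq0 : 0 <= Sq := sabs_ge0 q.
have n0 := pos_INR n.
set e := eps / (Sp * Sq + 1).
have ep : 0 < e by apply: Rdiv_lt_0_compat => //; nra.
have Hc : forall i : 'I_n, exists del, 0 < del /\ forall y, vnorm (vsub y x) < del ->
    vnorm (vsub (Hs i y) (Hs i x)) < e.
  move=> i; exact: (proj2 (HH i) x e ep).
have [d0 [Hd0 H0]] := @fin_delta n (vec n) (fun y => vnorm (vsub y x)) _ Hc.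
exists (d0 / (INR n * (Sp + Sq) + 1)); split; first by apply: Rdiv_lt_0_compat => //; nra.
move=> t [t0 td].
have tS : t * (INR n * (Sp + Sq)) < d0.
  have := Rmult_lt_compat_r (INR n * (Sp + Sq) + 1) _ _ ltac:(nra) td.
  rewrite /Rdiv Rmult_assoc Rinv_l; nra.
have near : forall s u, 0 <= s <= t -> 0 <= u <= t -> vnorm (vsub (pt x p q s u) x) < d0.
  move=> s u Hs' Hu.
  have : vnorm (vsub (pt x p q s u) x) <= INR n * (t * (Sp + Sq)).
    apply: vnorm_coord_bound => k; rewrite /vsub /pt.
    have -> : x k + s * p k + u * q k - x k = s * p k + u * q k by ring.
    apply: Rle_trans (Rabs_triang _ _) _; rewrite !Rabs_mult.
    have : Rabs (p k) <= Sp by apply: (@rsum_single n (fun i => Rabs (p i))) => j; exact: Rabs_pos.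
    have : Rabs (q k) <= Sq by apply: (@rsum_single n (fun i => Rabs (q i))) => j; exact: Rabs_pos.
    rewrite (Rabs_right s); last lra. rewrite (Rabs_right u); last lra.
    have := Rabs_pos (p k); have := Rabs_pos (q k). nra.
  nra.
pose g s := f (pt x p q s t) - f (pt x p q s 0).
pose g' s := dot (G (pt x p q s t)) p - dot (G (pt x p q s 0)) p.
have Hg : forall s, derivable_pt_lim g s (g' s).
  move=> s; apply: derivable_pt_lim_minus.
  - exact: (chain (c := fun s => pt x p q s t) (HfG _) (fun k => d_pt_s x p q t s k)).
  - exact: (chain (c := fun s => pt x p q s 0) (HfG _) (fun k => d_pt_s x p q 0 s k)).
have [s1 [Es1 Hs1]] := MVT_cor2 g g' 0 t t0 (fun c _ => Hg c).
have ED : Dq f x p q t = g' s1 * t by rewrite /Dq; rewrite Rminus_0_r in Es1; rewrite -Es1 /g; ring.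
have Eg' : g' s1 = \big[Rplus/0]_(k < n) (p k * (G (pt x p q s1 t) k - G (pt x p q s1 0) k)).
  rewrite /g' /dot -rsum_sub; apply: eq_bigr => i _; ring.
have Hk : forall k, Rabs (p k * (G (pt x p q s1 t) k - G (pt x p q s1 0) k) - t * (p k * dot (Hs k x) q))
     <= Rabs (p k) * (t * (Sq * e)).
  move=> k.
  pose h u := G (pt x p q s1 u) k.
  have Hh : forall u, derivable_pt_lim h u (dot (Hs k (pt x p q s1 u)) q).
    move=> u; exact: (chain (c := fun u => pt x p q s1 u) ((proj1 (HH k)) _) (fun j => d_pt_t x p q s1 u j)).
  have [u1 [Eu1 Hu1]] := MVT_cor2 h _ 0 t t0 (fun c _ => Hh c).
  rewrite /h in Eu1; rewrite Eu1 Rminus_0_r.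
  have -> : p k * (dot (Hs k (pt x p q s1 u1)) q * t) - t * (p k * dot (Hs k x) q) =
    p k * t * (dot (Hs k (pt x p q s1 u1)) q - dot (Hs k x) q) by ring.
  rewrite !Rabs_mult (Rabs_right t); last lra.
  have : Rabs (dot (Hs k (pt x p q s1 u1)) q - dot (Hs k x) q) <= Sq * e.
    apply: dot_vsub_le; apply: H0; apply: near; lra.
  move=> Hd; rewrite Rmult_assoc; apply: Rmult_le_compat_l; first exact: Rabs_pos. apply: Rmult_le_compat_l; lra.
rewrite ED Eg'.
have -> : \big[Rplus/0]_(k < n) (p k * (G (pt x p q s1 t) k - G (pt x p q s1 0) k)) * t - t * t * Lh Hs x p q
  = t * \big[Rplus/0]_(k < n) (p k * (G (pt x p q s1 t) k - G (pt x p q s1 0) k) - t * (p k * dot (Hs k x) q)).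
  rewrite rsum_sub rsum_scal /Lh; ring.
rewrite Rabs_mult (Rabs_right t); last lra.
have Hs2 := rsum_abs (fun k => p k * (G (pt x p q s1 t) k - G (pt x p q s1 0) k) - t * (p k * dot (Hs k x) q)).
have Hs3 := rsum_le Hk.
have E3 : \big[Rplus/0]_(i < n) (Rabs (p i) * (t * (Sq * e))) = (t * (Sq * e)) * Sp.
  rewrite /Sp /sabs -rsum_scal; apply: eq_bigr => i _; ring.
rewrite E3 in Hs3.
have Hpe : Sp * Sq * e <= eps.
  rewrite /e.
  have -> : Sp * Sq * (eps / (Sp * Sq + 1)) = eps * (Sp * Sq / (Sp * Sq + 1)) by field; nra.
  have : Sp * Sq / (Sp * Sq + 1) <= 1.
    apply: (Rmult_le_reg_r (Sp * Sq + 1)); first nra.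
    rewrite /Rdiv Rmult_assoc Rinv_l; nra.
  nra.
have : t * Rabs (\big[Rplus/0]_(k < n) (p k * (G (pt x p q s1 t) k - G (pt x p q s1 0) k) - t * (p k * dot (Hs k x) q)))
  <= t * (t * (Sq * e) * Sp) by apply: Rmult_le_compat_l; lra.
nra.
Qed.

Lemma Dq_sym n (f : vec n -> R) x p q t : Dq f x p q t = Dq f x q p t.
Proof.
rewrite /Dq.
have E1 : pt x p q t t = pt x q p t t by apply: functional_extensionality => k; rewrite /pt; ring.
have E2 : pt x p q t 0 = pt x q p 0 t by apply: functional_extensionality => k; rewrite /pt; ring.
have E3 : pt x p q 0 t = pt x q p t 0 by apply: functional_extensionality => k; rewrite /pt; ring.
have E4 : pt x p q 0 0 = pt x q p 0 0 by apply: functional_extensionality => k; rewrite /pt; ring.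
rewrite E1 E2 E3 E4; ring.
Qed.

Lemma schwarz n (f : vec n -> R) G Hs
  (HfG : forall x, has_grad f (G x) x)
  (HH : forall i, C1_with_grad (fun x => G x i) (Hs i)) x p q :
  Lh Hs x p q = Lh Hs x q p.
Proof.
apply: NNPP => Hne.
have hp : 0 < Rabs (Lh Hs x p q - Lh Hs x q p) by apply: Rabs_pos_lt; lra.
set eps := Rabs (Lh Hs x p q - Lh Hs x q p) / 4.
have ep : 0 < eps by rewrite /eps; lra.
have [d1 [Hd1 H1]] := schwarz_lim HfG HH x p q ep.
have [d2 [Hd2 H2]] := schwarz_lim HfG HH x q p ep.
set t := Rmin d1 d2 / 2.
have tp : 0 < t by rewrite /t; have := Rmin_glb_lt _ _ _ Hd1 Hd2; lra.
have t1 : t < d1 by rewrite /t; have := Rmin_l d1 d2; lra.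
have t2 : t < d2 by rewrite /t; have := Rmin_r d1 d2; lra.
have A := H1 t (conj tp t1). have B := H2 t (conj tp t2).
rewrite Dq_sym in A.
have C : Rabs (t * t * Lh Hs x p q - t * t * Lh Hs x q p) <= 2 * eps * (t * t).
  have := Rabs_triang (Dq f x q p t - t * t * Lh Hs x q p) (- (Dq f x q p t - t * t * Lh Hs x p q)).
  rewrite Rabs_Ropp.
  have -> : Dq f x q p t - t * t * Lh Hs x q p + - (Dq f x q p t - t * t * Lh Hs x p q) =
     t * t * Lh Hs x p q - t * t * Lh Hs x q p by ring.
  lra.
have EC : t * t * Lh Hs x p q - t * t * Lh Hs x q p = (t * t) * (Lh Hs x p q - Lh Hs x q p) by ring.
rewrite EC in C.
rewrite Rabs_mult (Rabs_right (t * t)) in C; last nra.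
have tt : 0 < t * t by nra.
rewrite /eps in C. nra.
Qed.


Lemma deriv_cont F x l : derivable_pt_lim F x l ->
  forall e, 0 < e -> exists del, 0 < del /\ forall y, Rabs (y - x) < del -> Rabs (F y - F x) < e.
Proof.
move=> H e He.
have [d1 Hd1] := H 1 Rlt_0_1.
have lp := Rabs_pos l.
exists (Rmin d1 (e / (Rabs l + 1))); split.
  apply: Rmin_glb_lt; [exact: cond_pos | apply: Rdiv_lt_0_compat; lra].
move=> y Hy.
case: (Req_dec y x) => [->|yx]; first by rewrite Rminus_diag Rabs_R0.
have h0 : y - x <> 0 by lra.
have := Hd1 (y - x) h0 (Rlt_le_trans _ _ _ Hy (Rmin_l _ _)).
have -> : x + (y - x) = y by ring.
have ha : 0 < Rabs (y - x) by apply: Rabs_pos_lt.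
have Hy2 : Rabs (y - x) < e / (Rabs l + 1) := Rlt_le_trans _ _ _ Hy (Rmin_r _ _).
have Hy3 : Rabs (y - x) * (Rabs l + 1) < e.
  have := Rmult_lt_compat_r (Rabs l + 1) _ _ ltac:(lra) Hy2.
  rewrite /Rdiv Rmult_assoc Rinv_l; lra.
have -> : (F y - F x) / (y - x) - l = (F y - F x - l * (y - x)) / (y - x) by field.
rewrite Rabs_div // => Hq.
have Hq2 : Rabs (F y - F x - l * (y - x)) < Rabs (y - x).
  have := Rmult_lt_compat_r (Rabs (y - x)) _ _ ha Hq.
  rewrite /Rdiv Rmult_assoc Rinv_l; lra.
have := Rabs_triang (F y - F x - l * (y - x)) (l * (y - x)).
have -> : F y - F x - l * (y - x) + l * (y - x) = F y - F x by ring.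
rewrite Rabs_mult. nra.
Qed.

Lemma grad_cont n (phi : vec n -> R) g x : has_grad phi g x ->
  forall e, 0 < e -> exists del, 0 < del /\ forall y, vnorm (vsub y x) < del -> Rabs (phi y - phi x) < e.
Proof.
move=> H e He.
have [d1 [Hd1 H1]] := H 1 Rlt_0_1.
have Sg0 := sabs_ge0 g.
exists (Rmin d1 (e / (sabs g + 2))); split.
  apply: Rmin_glb_lt; [done | apply: Rdiv_lt_0_compat; lra].
move=> y Hy.
have := H1 (vsub y x) (Rlt_le_trans _ _ _ Hy (Rmin_l _ _)).
rewrite vsub_vadd => Hb.
have Hy2 : vnorm (vsub y x) < e / (sabs g + 2) := Rlt_le_trans _ _ _ Hy (Rmin_r _ _).
have Hy3 : vnorm (vsub y x) * (sabs g + 2) < e.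
  have := Rmult_lt_compat_r (sabs g + 2) _ _ ltac:(lra) Hy2.
  rewrite /Rdiv Rmult_assoc Rinv_l; lra.
have Hd : Rabs (dot g (vsub y x)) <= sabs g * vnorm (vsub y x).
  apply: dot_bound => i; exact: coord_le_norm.
have := Rabs_triang (phi y - phi x - dot g (vsub y x)) (dot g (vsub y x)).
have -> : phi y - phi x - dot g (vsub y x) + dot g (vsub y x) = phi y - phi x by ring.
have := vnorm_ge0 (vsub y x).
nra.
Qed.

Lemma dot_coord_le n (a b q : vec n) e : (forall i, Rabs (a i - b i) <= e) ->
  Rabs (dot a q - dot b q) <= sabs q * e.
Proof.
move=> H.
have -> : dot a q - dot b q = dot q (vsub a b).
  rewrite /dot -rsum_sub; apply: eq_bigr => i _; rewrite /vsub; ring.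
apply: dot_bound => i; exact: H.
Qed.

Lemma sabs_coord n (p : vec n) k : Rabs (p k) <= sabs p.
Proof. by apply: (@rsum_single n (fun i => Rabs (p i))) => j; exact: Rabs_pos. Qed.

Lemma pt_dist n (x p q : vec n) s t s' t' :
  vnorm (vsub (pt x p q s t) (pt x p q s' t')) <= INR n * (Rabs (s - s') * sabs p + Rabs (t - t') * sabs q).
Proof.
apply: vnorm_coord_bound => k; rewrite /vsub /pt.
have -> : x k + s * p k + t * q k - (x k + s' * p k + t' * q k) = (s - s') * p k + (t - t') * q k by ring.
apply: Rle_trans (Rabs_triang _ _) _; rewrite !Rabs_mult.
have := sabs_coord p k; have := sabs_coord q k.
have := Rabs_pos (s - s'); have := Rabs_pos (t - t'); have := Rabs_pos (p k); have := Rabs_pos (q k).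
nra.
Qed.

Lemma pt00 n (x p q : vec n) : pt x p q 0 0 = x.
Proof. apply: functional_extensionality => k; rewrite /pt; ring. Qed.

Lemma absle x a : Rabs x <= a -> - a <= x <= a.
Proof. move=> H; have := Rle_abs x; have := Rle_abs (- x); rewrite Rabs_Ropp; lra. Qed.

Lemma abslt x a : Rabs x < a -> - a < x < a.
Proof. move=> H; have := Rle_abs x; have := Rle_abs (- x); rewrite Rabs_Ropp; lra. Qed.

Lemma abs_intro x a : - a <= x <= a -> Rabs x <= a.
Proof. move=> H; apply: Rabs_le; lra. Qed.

Lemma abs_intro_lt x a : - a < x < a -> Rabs x < a.
Proof. move=> H; apply: Rabs_def1; lra. Qed.


Lemma implicit_curve n (f : vec n -> R) (G : vec n -> vec n)
  (HfG : forall y, has_grad f (G y) y) x w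
  (HGc : forall e, 0 < e -> exists rho, 0 < rho /\ forall y, vnorm (vsub y x) < rho -> forall i, Rabs (G y i - G x i) < e) :
  0 < dot (G x) (G x) ->
  exists sig1 (T : R -> R), 0 < sig1 /\
    (forall s, Rabs s < sig1 -> f (pt x w (G x) s (T s)) = f x) /\
    T 0 = 0 /\
    (forall s0, Rabs s0 < sig1 -> forall eta, 0 < eta -> exists del, 0 < del /\
        forall s, Rabs (s - s0) < del -> Rabs (T s - T s0) < eta).
Proof.
set u := G x => U2p.
set U2 := dot u u in U2p.
set Su := sabs u. set Sw := sabs w.
have Su0 : 0 <= Su := sabs_ge0 u. have Sw0 : 0 <= Sw := sabs_ge0 w.
have n0 := pos_INR n.
set e0 := U2 / (2 * (Su + 1)).
have e0p : 0 < e0 by apply: Rdiv_lt_0_compat; lra.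
have [rho [Hrho Hr]] := HGc e0 e0p.
set tau0 := rho / (2 * (INR n * Su + 1)).
set sig0 := rho / (2 * (INR n * Sw + 1)).
have tau0p : 0 < tau0 by apply: Rdiv_lt_0_compat; nra.
have sig0p : 0 < sig0 by apply: Rdiv_lt_0_compat; nra.
have ntau : INR n * Su * tau0 < rho / 2.
  rewrite /tau0. have -> : INR n * Su * (rho / (2 * (INR n * Su + 1))) = rho / 2 * (INR n * Su / (INR n * Su + 1)) by field; nra.
  have : INR n * Su / (INR n * Su + 1) < 1.
    apply: (Rmult_lt_reg_r (INR n * Su + 1)); first nra.
    rewrite /Rdiv Rmult_assoc Rinv_l; nra.
  nra.
have nsig : INR n * Sw * sig0 < rho / 2.
  rewrite /sig0. have -> : INR n * Sw * (rho / (2 * (INR n * Sw + 1))) = rho / 2 * (INR n * Sw / (INR n * Sw + 1)) by field; nra.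
  have : INR n * Sw / (INR n * Sw + 1) < 1.
    apply: (Rmult_lt_reg_r (INR n * Sw + 1)); first nra.
    rewrite /Rdiv Rmult_assoc Rinv_l; nra.
  nra.
pose g s t := f (pt x w u s t) - f x.
have Hpos : forall s t, Rabs s <= sig0 -> Rabs t <= tau0 -> U2 / 2 < dot (G (pt x w u s t)) u.
  move=> s t Hs Ht.
  have Hn : vnorm (vsub (pt x w u s t) x) < rho.
    have Hd := pt_dist x w u s t 0 0; rewrite pt00 !Rminus_0_r -/Sw -/Su in Hd.
    have B1 : 0 <= INR n * Sw by nra.
    have B2 : 0 <= INR n * Su by nra.
    have A1 : INR n * (Rabs s * Sw) <= INR n * Sw * sig0 by nra.
    have A2 : INR n * (Rabs t * Su) <= INR n * Su * tau0 by nra.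
    lra.
  have H2 := dot_coord_le u (fun i => Rlt_le _ _ (Hr _ Hn i)).
  have H1 : Su * e0 < U2 / 2.
    rewrite /e0. have -> : Su * (U2 / (2 * (Su + 1))) = U2 / 2 * (Su / (Su + 1)) by field; lra.
    have : Su / (Su + 1) < 1.
      apply: (Rmult_lt_reg_r (Su + 1)); first lra.
      rewrite /Rdiv Rmult_assoc Rinv_l; lra.
    nra.
  have H3 := abslt (Rle_lt_trans _ _ _ H2 H1).
  change (dot (G x) u) with U2 in H3. lra.
have Hgt : forall s t, derivable_pt_lim (fun t => g s t) t (dot (G (pt x w u s t)) u).
  move=> s t.
  have := derivable_pt_lim_minus _ _ t _ _
    (chain (c := fun t => pt x w u s t) (HfG _) (fun k => d_pt_t x w u s t k))
    (derivable_pt_lim_const (f x) t).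
  rewrite Rminus_0_r. apply: derivable_pt_lim_ext => z; done.
have Hgs : forall s t, derivable_pt_lim (fun s => g s t) s (dot (G (pt x w u s t)) w).
  move=> s t.
  have := derivable_pt_lim_minus _ _ s _ _
    (chain (c := fun s => pt x w u s t) (HfG _) (fun k => d_pt_s x w u t s k))
    (derivable_pt_lim_const (f x) s).
  rewrite Rminus_0_r. apply: derivable_pt_lim_ext => z; done.
have Hmono : forall s a b, Rabs s <= sig0 -> - tau0 <= a -> a < b -> b <= tau0 -> g s a < g s b.
  move=> s a b Hs Ha Hab Hb.
  have [c [Ec Hc]] := MVT_cor2 (fun t => g s t) _ a b Hab (fun c _ => Hgt s c).
  have Hp := Hpos s c Hs (abs_intro (conj (ltac:(lra) : - tau0 <= c) (ltac:(lra) : c <= tau0))).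
  have : 0 < dot (G (pt x w u s c)) u * (b - a) by apply: Rmult_lt_0_compat; lra.
  lra.
have Hmono_le : forall s a b, Rabs s <= sig0 -> - tau0 <= a -> a <= b -> b <= tau0 -> g s a <= g s b.
  move=> s a b Hs Ha Hab Hb; case: (Req_dec a b) => [->|ne]; first lra.
  apply: Rlt_le; apply: Hmono => //; lra.
have g00 : g 0 0 = 0 by rewrite /g pt00; ring.
set tau1 := tau0 / 2.
have gp : 0 < g 0 tau1.
  have := Hmono 0 0 tau1; rewrite g00 Rabs_R0 /tau1; move=> H; apply: H; lra.
have gn : g 0 (- tau1) < 0.
  have := Hmono 0 (- tau1) 0; rewrite g00 Rabs_R0 /tau1; move=> H; apply: H; lra.
have [da [Hda Ha]] := deriv_cont (Hgs 0 tau1) gp.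
have [db [Hdb Hb]] := deriv_cont (Hgs 0 (- tau1)) (ltac:(lra) : 0 < - g 0 (- tau1)).
set sig1 := Rmin (Rmin da db) sig0.
have sig1p : 0 < sig1 by apply: Rmin_glb_lt => //; apply: Rmin_glb_lt.
have s1a : sig1 <= da by rewrite /sig1; have := Rmin_l (Rmin da db) sig0; have := Rmin_l da db; lra.
have s1b : sig1 <= db by rewrite /sig1; have := Rmin_l (Rmin da db) sig0; have := Rmin_r da db; lra.
have s10 : sig1 <= sig0 := Rmin_r _ _.
have Hex : forall s, exists t, Rabs s < sig1 -> - tau1 <= t <= tau1 /\ g s t = 0.
  move=> s; case: (Rlt_dec (Rabs s) sig1) => Hs; last by exists 0.
  have Hs' : Rabs (s - 0) < sig1 by rewrite Rminus_0_r.
  have H1 := abslt (Ha s ltac:(lra)). have H2 := abslt (Hb s ltac:(lra)).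
  have cont : continuity (fun t => g s t).
    move=> t; apply: derivable_continuous_pt; exact: (exist _ _ (Hgt s t)).
  have [z [Hz1 Hz2]] := IVT (fun t => g s t) (- tau1) tau1 cont ltac:(rewrite /tau1; lra) ltac:(lra) ltac:(lra).
  by exists z.
pose T s := proj1_sig (constructive_indefinite_description _ (Hex s)).
have HT : forall s, Rabs s < sig1 -> - tau1 <= T s <= tau1 /\ g s (T s) = 0.
  move=> s; exact: (proj2_sig (constructive_indefinite_description _ (Hex s))).
have uniq : forall s t1 t2, Rabs s <= sig0 -> - tau0 <= t1 <= tau0 -> - tau0 <= t2 <= tau0 ->
    g s t1 = g s t2 -> t1 = t2.
  move=> s t1 t2 Hs H1 H2 E.
  case: (Rtotal_order t1 t2) => [lt|[//|gt]].
    have := Hmono s t1 t2 Hs ltac:(lra) lt ltac:(lra); lra.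
  have := Hmono s t2 t1 Hs ltac:(lra) gt ltac:(lra); lra.
exists sig1, T; split => //; split.
  move=> s Hs; have [_ E] := HT s Hs; rewrite /g in E; lra.
have T0 : T 0 = 0.
  have H0 : Rabs 0 < sig1 by rewrite Rabs_R0.
  have [B E] := HT 0 H0.
  rewrite /tau1 in B.
  apply: (uniq 0 (T 0) 0); rewrite ?Rabs_R0; try lra.
split => // s0 Hs0 eta Heta.
have [B0 E0] := HT s0 Hs0.
set et := Rmin eta tau1.
have etp : 0 < et by apply: Rmin_glb_lt => //; rewrite /tau1; lra.
have ete : et <= eta := Rmin_l _ _. have ett : et <= tau1 := Rmin_r _ _.
have s0s : Rabs s0 <= sig0 by lra.
have gm : g s0 (T s0 - et) < 0 by rewrite -E0; apply: Hmono; rewrite /tau1 in B0 ett |- *; lra.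
have gM : 0 < g s0 (T s0 + et) by rewrite -E0; apply: Hmono; rewrite /tau1 in B0 ett |- *; lra.
have [d1 [Hd1 H1]] := deriv_cont (Hgs s0 (T s0 + et)) gM.
have [d2 [Hd2 H2]] := deriv_cont (Hgs s0 (T s0 - et)) (ltac:(lra) : 0 < - g s0 (T s0 - et)).
exists (Rmin (Rmin d1 d2) (sig1 - Rabs s0)); split.
  apply: Rmin_glb_lt; [exact: Rmin_glb_lt | lra].
move=> s Hs.
have Hs1 : Rabs (s - s0) < d1 by have := Rmin_l (Rmin d1 d2) (sig1 - Rabs s0); have := Rmin_l d1 d2; lra.
have Hs2 : Rabs (s - s0) < d2 by have := Rmin_l (Rmin d1 d2) (sig1 - Rabs s0); have := Rmin_r d1 d2; lra.
have Hs3 : Rabs s < sig1.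
  have := Rmin_r (Rmin d1 d2) (sig1 - Rabs s0).
  have := Rabs_triang (s - s0) s0. have -> : s - s0 + s0 = s by ring. lra.
have [B E] := HT s Hs3.
have A1 := abslt (H1 s Hs1). have A2 := abslt (H2 s Hs2).
have ss : Rabs s <= sig0 by lra.
apply: abs_intro_lt; split.
- apply: Rnot_le_lt => Hle.
  have := Hmono_le s (T s) (T s0 - et) ss ltac:(rewrite /tau1 in B; lra) ltac:(lra) ltac:(rewrite /tau1 in B0 ett; lra).
  lra.
- apply: Rnot_le_lt => Hle.
  have := Hmono_le s (T s0 + et) (T s) ss ltac:(rewrite /tau1 in B0 ett; lra) ltac:(lra) ltac:(rewrite /tau1 in B; lra).
  lra.
Qed.


Lemma curve_connected n (c : R -> vec n) a
  (Hc : forall s0, Rabs s0 < a -> forall rho, 0 < rho -> exists del, 0 < del /\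
     forall s, Rabs (s - s0) < del -> vnorm (vsub (c s) (c s0)) < rho) :
  vconnected (fun z => exists s, Rabs s < a /\ z = c s).
Proof.
move=> [U [V [oU [oV [cov [dis [[zu [[su [Hsu ->]] Uu]] [zv [[sv [Hsv ->]] Vv]]]]]]]]].
have inI : forall s, in_interval (Some (- a)) (Some a) s <-> Rabs s < a.
  move=> s; rewrite /in_interval; split; [move=> H; apply: abs_intro_lt; lra | move/abslt; lra].
have key := @interval_conn (Some (- a)) (Some a) (fun s => U (c s)) su (proj2 (inI su) Hsu) Uu.
have Cs : forall s, Rabs s < a -> exists s', Rabs s' < a /\ c s = c s' by move=> s Hs; exists s.
have Hop : forall t, in_interval (Some (- a)) (Some a) t -> U (c t) -> exists e, 0 < e /\
    forall s, in_interval (Some (- a)) (Some a) s -> Rabs (s - t) < e -> U (c s).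
  move=> t It Ut; have It' := proj1 (inI t) It.
  have [r [Hr Hr']] := oU _ Ut.
  have [d [Hd Hd']] := Hc t It' r Hr.
  exists d; split => // s Is Hs; apply: Hr'; exact: Hd'.
have Hcl : forall t, in_interval (Some (- a)) (Some a) t -> ~ U (c t) -> exists e, 0 < e /\
    forall s, in_interval (Some (- a)) (Some a) s -> Rabs (s - t) < e -> ~ U (c s).
  move=> t It Ut; have It' := proj1 (inI t) It.
  have Vt : V (c t) by case: (cov _ (Cs t It')) => //.
  have [r [Hr Hr']] := oV _ Vt.
  have [d [Hd Hd']] := Hc t It' r Hr.
  exists d; split => // s Is Hs Us.
  exact: (dis _ (Cs s (proj1 (inI s) Is)) Us (Hr' _ (Hd' _ Hs))).
have Uv := key Hop Hcl sv (proj2 (inI sv) Hsv).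
exact: (dis _ (Cs sv Hsv) Uv Vv).
Qed.


Lemma level_perp n (f : vec n -> R) G (Hs : 'I_n -> vec n -> vec n)
  (HfG : forall x, has_grad f (G x) x)
  (HH : forall i, C1_with_grad (fun x => G x i) (Hs i))
  (Hmet : forall x y, same_component (fun z => f z = f x) x y -> vnorm (G x) = vnorm (G y))
  x w : 0 < dot (G x) (G x) -> dot (G x) w = 0 -> Lh Hs x (G x) w = 0.
Proof.
move=> U2p Hw.
have HGc : forall e, 0 < e -> exists rho, 0 < rho /\ forall y, vnorm (vsub y x) < rho -> forall i, Rabs (G y i - G x i) < e.
  move=> e He.
  have Hi : forall i : 'I_n, exists del, 0 < del /\ forall y, vnorm (vsub y x) < del -> Rabs (G y i - G x i) < e.
    move=> i; exact: (grad_cont ((proj1 (HH i)) x) He).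
  have [d [Hd H]] := @fin_delta n (vec n) (fun y => vnorm (vsub y x)) _ Hi.
  exists d; split => // y Hy i; exact: H.
have [sig1 [T [s1p [Hlev [T0 Tc]]]]] := @implicit_curve n f G HfG x w HGc U2p.
set u := G x in U2p Hw Hlev *.
set U2 := dot u u in U2p.
set Su := sabs u. set Sw := sabs w.
have Su0 : 0 <= Su := sabs_ge0 u. have Sw0 : 0 <= Sw := sabs_ge0 w.
have n0 := pos_INR n.
pose c s := pt x w u s (T s).
have c0 : c 0 = x by rewrite /c T0 pt00.
have Hcc : forall s0, Rabs s0 < sig1 -> forall rho, 0 < rho -> exists del, 0 < del /\
     forall s, Rabs (s - s0) < del -> vnorm (vsub (c s) (c s0)) < rho.
  move=> s0 Hs0 r Hr.
  have eta : 0 < r / (2 * (INR n * Su + 1)) by apply: Rdiv_lt_0_compat; nra.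
  have [dT [HdT HT]] := Tc s0 Hs0 _ eta.
  exists (Rmin dT (r / (2 * (INR n * Sw + 1)))); split.
    apply: Rmin_glb_lt => //; apply: Rdiv_lt_0_compat; nra.
  move=> s Hss.
  have H1 := HT s (Rlt_le_trans _ _ _ Hss (Rmin_l _ _)).
  have H2 : Rabs (s - s0) < r / (2 * (INR n * Sw + 1)) := Rlt_le_trans _ _ _ Hss (Rmin_r _ _).
  have Hd := pt_dist x w u s (T s) s0 (T s0). rewrite -/Sw -/Su in Hd.
  rewrite /c; apply: Rle_lt_trans Hd _.
  have A1 : INR n * Sw * Rabs (s - s0) < r / 2.
    have := Rmult_le_compat_l (INR n * Sw) _ _ ltac:(nra) (Rlt_le _ _ H2).
    have -> : INR n * Sw * (r / (2 * (INR n * Sw + 1))) = r / 2 * (INR n * Sw / (INR n * Sw + 1)) by field; nra.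
    have : INR n * Sw / (INR n * Sw + 1) < 1.
      apply: (Rmult_lt_reg_r (INR n * Sw + 1)); first nra.
      rewrite /Rdiv Rmult_assoc Rinv_l; nra.
    nra.
  have A2 : INR n * Su * Rabs (T s - T s0) < r / 2.
    have := Rmult_le_compat_l (INR n * Su) _ _ ltac:(nra) (Rlt_le _ _ H1).
    have -> : INR n * Su * (r / (2 * (INR n * Su + 1))) = r / 2 * (INR n * Su / (INR n * Su + 1)) by field; nra.
    have : INR n * Su / (INR n * Su + 1) < 1.
      apply: (Rmult_lt_reg_r (INR n * Su + 1)); first nra.
      rewrite /Rdiv Rmult_assoc Rinv_l; nra.
    nra.
  nra.
have Hconn := curve_connected Hcc.
have Hconst : forall s, Rabs s < sig1 -> dot (G (c s)) (G (c s)) = U2.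
  move=> s Hss.
  have Hsc : same_component (fun z => f z = f x) x (c s).
    exists (fun z => exists s, Rabs s < sig1 /\ z = c s); split; first exact: Hconn.
    split; first by move=> z [s' [Hs' ->]]; exact: Hlev.
    split; first by exists 0; rewrite Rabs_R0 c0.
    by exists s.
  have E := Hmet x (c s) Hsc. rewrite /vnorm in E.
  symmetry; exact: (sqrt_inj _ _ (dot_ge0 _) (dot_ge0 _) E).
have TD : derivable_pt_lim T 0 0.
  move=> eps Heps.
  set ep1 := Rmin (U2 / (2 * (INR n * Su + 1))) (eps * U2 / (4 * (INR n * Sw + 1))).
  have ep1p : 0 < ep1 by apply: Rmin_glb_lt; apply: Rdiv_lt_0_compat; nra.
  have [d1 [Hd1 H1]] := HfG x ep1 ep1p.
  have eta : 0 < d1 / (2 * (INR n * Su + 1)) by apply: Rdiv_lt_0_compat; nra.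
  have [dT [HdT HT]] := Tc 0 ltac:(by rewrite Rabs_R0) _ eta.
  set del := Rmin (Rmin sig1 dT) (d1 / (2 * (INR n * Sw + 1))).
  have delp : 0 < del.
    apply: Rmin_glb_lt; [exact: Rmin_glb_lt | apply: Rdiv_lt_0_compat; nra].
  exists (mkposreal del delp) => h h0 /= Hh.
  rewrite /del in Hh.
  have Hh1 : Rabs h < sig1 by have := Rmin_l (Rmin sig1 dT) (d1 / (2 * (INR n * Sw + 1))); have := Rmin_l sig1 dT; lra.
  have Hh2 : Rabs (h - 0) < dT by rewrite Rminus_0_r; have := Rmin_l (Rmin sig1 dT) (d1 / (2 * (INR n * Sw + 1))); have := Rmin_r sig1 dT; lra.
  have Hh3 : Rabs h < d1 / (2 * (INR n * Sw + 1)) := Rlt_le_trans _ _ _ Hh (Rmin_r _ _).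
  have HTh := HT h Hh2. rewrite T0 Rminus_0_r in HTh.
  have Hd := pt_dist x w u h (T h) 0 0. rewrite pt00 !Rminus_0_r -/Sw -/Su in Hd.
  have A1 : INR n * Sw * Rabs h < d1 / 2.
    have := Rmult_le_compat_l (INR n * Sw) _ _ ltac:(nra) (Rlt_le _ _ Hh3).
    have -> : INR n * Sw * (d1 / (2 * (INR n * Sw + 1))) = d1 / 2 * (INR n * Sw / (INR n * Sw + 1)) by field; nra.
    have : INR n * Sw / (INR n * Sw + 1) < 1.
      apply: (Rmult_lt_reg_r (INR n * Sw + 1)); first nra.
      rewrite /Rdiv Rmult_assoc Rinv_l; nra.
    nra.
  have A2 : INR n * Su * Rabs (T h) < d1 / 2.
    have := Rmult_le_compat_l (INR n * Su) _ _ ltac:(nra) (Rlt_le _ _ HTh).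
    have -> : INR n * Su * (d1 / (2 * (INR n * Su + 1))) = d1 / 2 * (INR n * Su / (INR n * Su + 1)) by field; nra.
    have : INR n * Su / (INR n * Su + 1) < 1.
      apply: (Rmult_lt_reg_r (INR n * Su + 1)); first nra.
      rewrite /Rdiv Rmult_assoc Rinv_l; nra.
    nra.
  set hv := vsub (pt x w u h (T h)) x in Hd.
  have Hnv : vnorm hv < d1 by nra.
  have Hg := H1 hv Hnv. rewrite vsub_vadd (Hlev h Hh1) in Hg.
  have Edot : dot u hv = T h * U2.
    have -> : dot u hv = dot u (fun k => h * w k + T h * u k).
      rewrite /dot; apply: eq_bigr => k _; rewrite /hv /vsub /pt; ring.
    rewrite dot_lin Hw; rewrite /U2; ring.
  change (dot (G x) hv) with (dot u hv) in Hg. rewrite Edot in Hg.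
  have Hg2 : Rabs (T h) * U2 <= ep1 * (INR n * (Rabs h * Sw + Rabs (T h) * Su)).
    have := Rle_trans _ _ _ Hg (Rmult_le_compat_l _ _ _ (Rlt_le _ _ ep1p) Hd).
    have -> : f x - f x - T h * U2 = - (T h * U2) by ring.
    by rewrite Rabs_Ropp Rabs_mult (Rabs_right U2); last lra.
  have B1 : ep1 * (INR n * Su) <= U2 / 2.
    have : ep1 <= U2 / (2 * (INR n * Su + 1)) := Rmin_l _ _.
    have : U2 / (2 * (INR n * Su + 1)) * (INR n * Su) <= U2 / 2.
      have -> : U2 / (2 * (INR n * Su + 1)) * (INR n * Su) = U2 / 2 * (INR n * Su / (INR n * Su + 1)) by field; nra.
      have : INR n * Su / (INR n * Su + 1) <= 1.
        apply: (Rmult_le_reg_r (INR n * Su + 1)); first nra.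
        rewrite /Rdiv Rmult_assoc Rinv_l; nra.
      nra.
    have : 0 <= INR n * Su by nra.
    nra.
  have B2 : ep1 * (INR n * Sw) <= eps * U2 / 4.
    have : ep1 <= eps * U2 / (4 * (INR n * Sw + 1)) := Rmin_r _ _.
    have : eps * U2 / (4 * (INR n * Sw + 1)) * (INR n * Sw) <= eps * U2 / 4.
      have -> : eps * U2 / (4 * (INR n * Sw + 1)) * (INR n * Sw) = eps * U2 / 4 * (INR n * Sw / (INR n * Sw + 1)) by field; nra.
      have : INR n * Sw / (INR n * Sw + 1) <= 1.
        apply: (Rmult_le_reg_r (INR n * Sw + 1)); first nra.
        rewrite /Rdiv Rmult_assoc Rinv_l; nra.
      have : 0 < eps * U2 by nra. nra.
    have : 0 <= INR n * Sw by nra.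
    nra.
  have ha : 0 < Rabs h by apply: Rabs_pos_lt.
  have Ta := Rabs_pos (T h).
  have Hg3 : Rabs (T h) * U2 <= ep1 * (INR n * Sw) * Rabs h + ep1 * (INR n * Su) * Rabs (T h) by nra.
  have Hg4 : Rabs (T h) * U2 / 2 <= eps * U2 / 4 * Rabs h by nra.
  have Hg5 : Rabs (T h) <= eps / 2 * Rabs h.
    apply: (Rmult_le_reg_r (U2 / 2)); first lra. nra.
  rewrite Rplus_0_l T0 Rminus_0_r Rminus_0_r Rabs_div //.
  apply: (Rmult_lt_reg_r (Rabs h)) => //.
  rewrite /Rdiv Rmult_assoc Rinv_l; last lra. nra.
have Hck : forall k, derivable_pt_lim (fun s => c s k) 0 (w k).
  move=> k.
  have := derivable_pt_lim_plus _ _ 0 _ _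
    (derivable_pt_lim_plus _ _ 0 _ _ (derivable_pt_lim_const (x k) 0)
       (derivable_pt_lim_scal _ (w k) 0 _ (derivable_pt_lim_id 0)))
    (derivable_pt_lim_mult _ _ 0 _ _ TD (derivable_pt_lim_const (u k) 0)).
  have -> : 0 + w k * 1 + (0 * fct_cte (u k) 0 + T 0 * 0) = w k by rewrite /fct_cte; ring.
  apply: derivable_pt_lim_ext => z; rewrite /c /pt /plus_fct /mult_fct /fct_cte /mult_real_fct; unfold Ranalysis1.id; ring.
have HGi : forall i, derivable_pt_lim (fun s => G (c s) i) 0 (dot (Hs i x) w).
  move=> i; have := chain (c := c) ((proj1 (HH i)) (c 0)) Hck; by rewrite c0.
have HN : derivable_pt_lim (fun s => dot (G (c s)) (G (c s))) 0
    (\big[Rplus/0]_(i < n) (dot (Hs i x) w * G x i + G x i * dot (Hs i x) w)).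
  rewrite /dot; apply: (@deriv_sum_list _ _ (fun i s => G (c s) i * G (c s) i)) => i.
  have := derivable_pt_lim_mult _ _ 0 _ _ (HGi i) (HGi i).
  rewrite c0. apply: derivable_pt_lim_ext => z; done.
have HN0 : derivable_pt_lim (fun s => dot (G (c s)) (G (c s))) 0 0.
  move=> eps Heps; exists (mkposreal sig1 s1p) => h h0 /= Hh.
  rewrite Rplus_0_l (Hconst h Hh) (Hconst 0 ltac:(by rewrite Rabs_R0)).
  rewrite Rminus_diag /Rdiv Rmult_0_l Rminus_0_r Rabs_R0 //.
have E := uniqueness_limite _ _ _ _ HN HN0.
have E2 : \big[Rplus/0]_(i < n) (dot (Hs i x) w * G x i + G x i * dot (Hs i x) w) = 2 * Lh Hs x u w.
  rewrite /Lh -rsum_scal; apply: eq_bigr => i _; rewrite /u; ring.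
rewrite E2 in E. lra.
Qed.


Lemma hess_parallel n (f : vec n -> R) G (Hs : 'I_n -> vec n -> vec n)
  (HfG : forall x, has_grad f (G x) x)
  (HH : forall i, C1_with_grad (fun x => G x i) (Hs i))
  (Hmet : forall x y, same_component (fun z => f z = f x) x y -> vnorm (G x) = vnorm (G y))
  x i :
  dot (G x) (G x) * dot (Hs i x) (G x) = dot (fun j => dot (Hs j x) (G x)) (G x) * G x i.
Proof.
set u := G x. set a := fun j => dot (Hs j x) u.
change (dot (Hs i x) u) with (a i).
have := dot_ge0 u; case => U2p; last first.
  rewrite -U2p (@dot_zero_coord n u i (esym U2p)); ring.
set U2 := dot u u in U2p *.
pose w := fun j => U2 * a j + (- dot a u) * u j.
have Huw : dot u w = 0 by rewrite /w dot_lin (dot_comm u a) /U2; ring.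
have HL := level_perp HfG HH Hmet U2p Huw.
rewrite (schwarz HfG HH) in HL.
have Ewa : Lh Hs x w u = dot w a by rewrite /Lh /dot; apply: eq_bigr => j _.
rewrite Ewa in HL.
have Eww : dot w w = 0.
  rewrite {2}/w dot_lin HL (dot_comm w u) Huw; ring.
have := @dot_zero_coord n w i Eww; rewrite /w; lra.
Qed.


Lemma interval_open lo hi t : in_interval lo hi t ->
  exists e, 0 < e /\ forall s, Rabs (s - t) < e -> in_interval lo hi s.
Proof.
case: lo => [l|]; case: hi => [h|]; rewrite /in_interval => [[H1 H2]].
- exists (Rmin (t - l) (h - t)); split; first by apply: Rmin_glb_lt; lra.
  move=> s /abslt Hs; have := Rmin_l (t - l) (h - t); have := Rmin_r (t - l) (h - t); lra.
- exists (t - l); split; first lra. move=> s /abslt; lra.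
- exists (h - t); split; first lra. move=> s /abslt; lra.
- exists 1; split => //; lra.
Qed.

Lemma curve_cont n (c : R -> vec n) (d : vec n) t1 :
  (forall k, derivable_pt_lim (fun s => c s k) t1 (d k)) ->
  forall rho, 0 < rho -> exists del, 0 < del /\ forall t, Rabs (t - t1) < del -> vnorm (vsub (c t) (c t1)) < rho.
Proof.
move=> Hc rho Hr.
have n0 := pos_INR n.
have e : 0 < rho / (INR n + 1) by apply: Rdiv_lt_0_compat; lra.
have Hi : forall k : 'I_n, exists del, 0 < del /\ forall t, Rabs (t - t1) < del -> Rabs (c t k - c t1 k) < rho / (INR n + 1).
  move=> k; exact: (deriv_cont (Hc k) e).
have [del [Hd H]] := @fin_delta n R (fun t => Rabs (t - t1)) _ Hi.
exists del; split => // t Ht.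
have := vnorm_coord_bound (v := vsub (c t) (c t1)) (a := rho / (INR n + 1)) (fun k => Rlt_le _ _ (H k t Ht)).
have : INR n * (rho / (INR n + 1)) < rho.
  have -> : INR n * (rho / (INR n + 1)) = rho * (INR n / (INR n + 1)) by field; lra.
  have : INR n / (INR n + 1) < 1.
    apply: (Rmult_lt_reg_r (INR n + 1)); first lra.
    rewrite /Rdiv Rmult_assoc Rinv_l; lra.
  nra.
lra.
Qed.

Lemma gronwall_loc (W dW : R -> R) t1 K eta : 0 < eta -> 0 <= K ->
  (forall t, Rabs (t - t1) < eta -> derivable_pt_lim W t (dW t)) ->
  (forall t, Rabs (t - t1) < eta -> 0 <= W t /\ Rabs (dW t) <= K * W t) ->
  W t1 = 0 -> forall t, Rabs (t - t1) < eta -> W t = 0.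
Proof.
move=> He HK Hd Hb W0 t Ht.
case: (Rtotal_order t1 t) => [lt|[<- //|gt]].
- pose E s := W s * exp (- K * (s - t1)).
  pose dE s := dW s * exp (- K * (s - t1)) + W s * (exp (- K * (s - t1)) * (- K * 1)).
  have HdE : forall s, t1 <= s <= t -> derivable_pt_lim E s (dE s).
    move=> s Hs.
    have Hs' : Rabs (s - t1) < eta by apply: Rle_lt_trans Ht; rewrite !Rabs_right; lra.
    apply: derivable_pt_lim_mult; first exact: Hd.
    have := derivable_pt_lim_comp (fun s => - K * (s - t1)) exp s (- K * 1) (exp (- K * (s - t1))).
    apply.
      have := derivable_pt_lim_scal (fun s => s - t1) (- K) s 1.
      apply; have := derivable_pt_lim_minus id (fun _ => t1) s 1 0 (derivable_pt_lim_id s) (derivable_pt_lim_const t1 s).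
      by rewrite Rminus_0_r.
    exact: derivable_pt_lim_exp.
  have [c [Ec Hc]] := MVT_cor2 E dE t1 t lt HdE.
  have Hc' : Rabs (c - t1) < eta by apply: Rle_lt_trans Ht; rewrite !Rabs_right; lra.
  have [Wc Bc] := Hb c Hc'.
  have [Wt _] := Hb t Ht.
  have ex1 := exp_pos (- K * (c - t1)). have ex2 := exp_pos (- K * (t - t1)).
  have Hneg : dE c <= 0.
    rewrite /dE. have := absle Bc. nra.
  have : E t <= 0 by move: Ec; rewrite /E W0 Rmult_0_l Rminus_0_r => ->; nra.
  rewrite /E; nra.
- pose E s := W s * exp (K * (s - t1)).
  pose dE s := dW s * exp (K * (s - t1)) + W s * (exp (K * (s - t1)) * (K * 1)).
  have HdE : forall s, t <= s <= t1 -> derivable_pt_lim E s (dE s).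
    move=> s Hs.
    have Hs' : Rabs (s - t1) < eta by apply: Rle_lt_trans Ht; rewrite !Rabs_left1; lra.
    apply: derivable_pt_lim_mult; first exact: Hd.
    have := derivable_pt_lim_comp (fun s => K * (s - t1)) exp s (K * 1) (exp (K * (s - t1))).
    apply.
      have := derivable_pt_lim_scal (fun s => s - t1) K s 1.
      apply; have := derivable_pt_lim_minus id (fun _ => t1) s 1 0 (derivable_pt_lim_id s) (derivable_pt_lim_const t1 s).
      by rewrite Rminus_0_r.
    exact: derivable_pt_lim_exp.
  have [c [Ec Hc]] := MVT_cor2 E dE t t1 gt HdE.
  have Hc' : Rabs (c - t1) < eta by apply: Rle_lt_trans Ht; rewrite !Rabs_left1; lra.
  have [Wc Bc] := Hb c Hc'.
  have [Wt _] := Hb t Ht.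
  have ex1 := exp_pos (K * (c - t1)). have ex2 := exp_pos (K * (t - t1)).
  have Hpos : 0 <= dE c.
    rewrite /dE. have := absle Bc. nra.
  have : 0 <= - E t by move: Ec; rewrite /E W0 Rmult_0_l Rminus_0_l => ->; nra.
  rewrite /E; nra.
Qed.


Definition Msum {n} (Hs : 'I_n -> vec n -> vec n) x :=
  \big[Rplus/0]_(i < n) \big[Rplus/0]_(k < n) Rabs (Hs i x k).

Lemma prod_le_dot n (u : vec n) i k : Rabs (u k * u i) <= dot u u.
Proof.
have := coord_sq_le u i; have := coord_sq_le u k.
rewrite Rabs_mult.
have := Rabs_pos (u k); have := Rabs_pos (u i).
have E1 : u i * u i = Rabs (u i) * Rabs (u i) by rewrite -Rabs_mult Rabs_right //; nra.
have E2 : u k * u k = Rabs (u k) * Rabs (u k) by rewrite -Rabs_mult Rabs_right //; nra.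
rewrite E1 E2. nra.
Qed.

Lemma quad_bound n (Hs : 'I_n -> vec n -> vec n) x (u : vec n) :
  Rabs (dot (fun i => dot (Hs i x) u) u) <= Msum Hs x * dot u u.
Proof.
apply: Rle_trans (rsum_abs _) _.
have -> : Msum Hs x * dot u u = \big[Rplus/0]_(i < n) \big[Rplus/0]_(k < n) (Rabs (Hs i x k) * dot u u).
  rewrite /Msum Rmult_comm -rsum_scal; apply: eq_bigr => i _.
  rewrite -rsum_scal; apply: eq_bigr => k _; ring.
apply: rsum_le => i.
have -> : dot (Hs i x) u * u i = \big[Rplus/0]_(k < n) (Hs i x k * (u k * u i)).
  rewrite /dot Rmult_comm -rsum_scal; apply: eq_bigr => k _; ring.
apply: Rle_trans (rsum_abs _) _; apply: rsum_le => k.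
rewrite Rabs_mult; apply: Rmult_le_compat_l; [exact: Rabs_pos | exact: prod_le_dot].
Qed.

Lemma Wbound n (u v a : vec n) j lam M :
  (forall i, dot u u * a i = lam * u i) -> Rabs lam <= M * dot u u ->
  (dot u u = 0 -> forall i, a i = 0) ->
  Rabs (\big[Rplus/0]_(i < n) ((a i * v j - a j * v i) * (u i * v j - u j * v i)
         + (u i * v j - u j * v i) * (a i * v j - a j * v i)))
   <= 2 * M * dot (fun i => u i * v j - u j * v i) (fun i => u i * v j - u j * v i).
Proof.
move=> Hpar Hlam Ha0.
have := dot_ge0 u; case => U2p.
- have Ea : forall i, a i = lam / dot u u * u i.
    move=> i; have := Hpar i; move=> E; apply: (Rmult_eq_reg_l (dot u u)); last lra.
    rewrite E; field; lra.
  have -> : \big[Rplus/0]_(i < n) ((a i * v j - a j * v i) * (u i * v j - u j * v i)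
         + (u i * v j - u j * v i) * (a i * v j - a j * v i))
     = (2 * (lam / dot u u)) * dot (fun i => u i * v j - u j * v i) (fun i => u i * v j - u j * v i).
    move: (lam / dot u u) Ea => c Ea.
    rewrite /dot -rsum_scal; apply: eq_bigr => i _; rewrite !Ea; ring.
  rewrite Rabs_mult.
  have Wp := dot_ge0 (fun i => u i * v j - u j * v i).
  rewrite (Rabs_right (dot _ _)); last lra.
  have : Rabs (2 * (lam / dot u u)) <= 2 * M.
    rewrite Rabs_mult Rabs_right; last lra.
    rewrite Rabs_div; last lra. rewrite (Rabs_right (dot u u)); last lra.
    have : Rabs lam / dot u u <= M.
      apply: (Rmult_le_reg_r (dot u u)) => //.
      rewrite /Rdiv Rmult_assoc Rinv_l; lra.
    lra.
  move=> H; apply: Rmult_le_compat_r => //.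
- have H0 := Ha0 (esym U2p).
  rewrite rsum_zero ?Rabs_R0.
    have Hu : forall i, u i = 0 by move=> i; apply: (@dot_zero_coord n u i (esym U2p)).
    have -> : dot (fun i => u i * v j - u j * v i) (fun i => u i * v j - u j * v i) = 0.
      by apply: rsum_zero => i; rewrite !Hu; ring.
    lra.
  by move=> i; rewrite !H0; ring.
Qed.


Lemma const_interval lo hi (phi : R -> R) t0 t :
  (forall s, in_interval lo hi s -> derivable_pt_lim phi s 0) ->
  in_interval lo hi t0 -> in_interval lo hi t -> phi t = phi t0.
Proof.
move=> Hd I0 It.
case: (Rtotal_order t0 t) => [lt|[-> //|gt]].
- have [c [Ec _]] := MVT_cor2 phi (fun _ => 0) t0 t lt (fun c Hc => Hd c (in_interval_convex I0 It Hc)).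
  lra.
- have [c [Ec _]] := MVT_cor2 phi (fun _ => 0) t t0 gt (fun c Hc => Hd c (in_interval_convex It I0 Hc)).
  lra.
Qed.

Unset Implicit Arguments.
Set Strict Implicit.

Theorem theorem1p14 (n : nat) (f : vec n -> R) (G : vec n -> vec n)
  (Hf : metric_function f G)
  (lo hi : option R) (Hlh : nonempty_interval lo hi)
  (gamma : R -> vec n) (Hgamma : is_gradient_line G lo hi gamma)
  (Hnonstat : exists t0, in_interval lo hi t0 /\ exists i : 'I_n, G (gamma t0) i <> 0) :
  exists (p v : vec n), (exists i : 'I_n, v i <> 0) /\
    forall t, in_interval lo hi t -> exists s : R, forall i : 'I_n, gamma t i = p i + s * v i.
Proof.
case: Hf => [[HfG HHex] Hmet].
pose Hs := fun i => proj1_sig (constructive_indefinite_description _ (HHex i)).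
have HH : forall i, C1_with_grad (fun x => G x i) (Hs i).
  move=> i; exact: (proj2_sig (constructive_indefinite_description _ (HHex i))).
case: Hnonstat => t0 [It0 [j Hj]].
set v := G (gamma t0) in Hj *.
pose wv t := fun i => G (gamma t) i * v j - G (gamma t) j * v i.
pose W t := dot (wv t) (wv t).
pose a t i := dot (Hs i (gamma t)) (G (gamma t)).
pose dW t := \big[Rplus/0]_(i < n) ((a t i * v j - a t j * v i) * (wv t i) + (wv t i) * (a t i * v j - a t j * v i)).
have Hu : forall t, in_interval lo hi t -> forall i, derivable_pt_lim (fun s => G (gamma s) i) t (a t i).
  move=> t It i; exact: (chain (c := gamma) ((proj1 (HH i)) (gamma t)) (Hgamma t It)).
have Hw : forall t, in_interval lo hi t -> forall i, derivable_pt_lim (fun s => wv s i) t (a t i * v j - a t j * v i).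
  move=> t It i.
  have := derivable_pt_lim_minus _ _ t _ _
    (derivable_pt_lim_mult _ _ t _ _ (Hu t It i) (derivable_pt_lim_const (v j) t))
    (derivable_pt_lim_mult _ _ t _ _ (Hu t It j) (derivable_pt_lim_const (v i) t)).
  rewrite /fct_cte.
  have -> : a t i * v j + G (gamma t) i * 0 - (a t j * v i + G (gamma t) j * 0) = a t i * v j - a t j * v i by ring.
  apply: derivable_pt_lim_ext => s; rewrite /minus_fct /mult_fct /fct_cte /wv //.
have HdW : forall t, in_interval lo hi t -> derivable_pt_lim W t (dW t).
  move=> t It; rewrite /W /dot /dW.
  apply: (@deriv_sum_list _ _ (fun i s => wv s i * wv s i)) => i.
  have := derivable_pt_lim_mult _ _ t _ _ (Hw t It i) (Hw t It i).
  apply: derivable_pt_lim_ext => s; rewrite /mult_fct //.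
have Hbnd : forall t, in_interval lo hi t -> Rabs (dW t) <= 2 * Msum Hs (gamma t) * W t.
  move=> t It.
  apply: (@Wbound n (G (gamma t)) v (a t) j (dot (a t) (G (gamma t)))).
  - move=> i; exact: (hess_parallel HfG HH Hmet (gamma t) i).
  - exact: quad_bound.
  - move=> U0 i; rewrite /a /dot; apply: rsum_zero => k.
    rewrite (@dot_zero_coord n (G (gamma t)) k U0); ring.
have Hloc : forall t1, in_interval lo hi t1 -> exists eta K, 0 < eta /\ 0 <= K /\
    forall t, Rabs (t - t1) < eta -> in_interval lo hi t /\ Msum Hs (gamma t) <= K.
  move=> t1 It1.
  have [e1 [He1 Ho]] := interval_open It1.
  set x1 := gamma t1.
  have Hi : forall i : 'I_n, exists del, 0 < del /\ forall y, vnorm (vsub y x1) < del ->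
      vnorm (vsub (Hs i y) (Hs i x1)) < 1.
    move=> i; exact: (proj2 (HH i) x1 1 Rlt_0_1).
  have [d1 [Hd1 H1]] := @fin_delta n (vec n) (fun y => vnorm (vsub y x1)) _ Hi.
  have [d2 [Hd2 H2]] := curve_cont (Hgamma t1 It1) Hd1.
  exists (Rmin e1 d2), (\big[Rplus/0]_(i < n) \big[Rplus/0]_(k < n) (Rabs (Hs i x1 k) + 1)).
  split; first exact: Rmin_glb_lt.
  split; first by apply: rsum_ge0 => i; apply: rsum_ge0 => k; have := Rabs_pos (Hs i x1 k); lra.
  move=> t Ht.
  split; first exact: (Ho t (Rlt_le_trans _ _ _ Ht (Rmin_l _ _))).
  have Hy := H2 t (Rlt_le_trans _ _ _ Ht (Rmin_r _ _)).
  apply: rsum_le => i; apply: rsum_le => k.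
  have := coord_le_norm (vsub (Hs i (gamma t)) (Hs i x1)) k.
  have := H1 i _ Hy. rewrite /vsub => A B.
  have := Rabs_triang (Hs i (gamma t) k - Hs i x1 k) (Hs i x1 k).
  have -> : Hs i (gamma t) k - Hs i x1 k + Hs i x1 k = Hs i (gamma t) k by ring.
  lra.
have W0 : W t0 = 0.
  rewrite /W /dot; apply: rsum_zero => i; rewrite /wv /v; ring.
have Wz : forall t, in_interval lo hi t -> W t = 0.
  apply: (interval_conn It0 W0).
  - move=> t1 It1 Wt1.
    have [eta [K [Heta [HK HK']]]] := Hloc t1 It1.
    exists eta; split => // s _ Hss.
    apply: (@gronwall_loc W dW t1 (2 * K) eta) => //.
    + lra.
    + move=> t Ht; exact: HdW (proj1 (HK' t Ht)).
    + move=> t Ht; have [It HM] := HK' t Ht.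
      have Wp : 0 <= W t := dot_ge0 _.
      split => //; apply: Rle_trans (Hbnd t It) _.
      have : 0 <= Msum Hs (gamma t) by apply: rsum_ge0 => i; apply: rsum_ge0 => k; exact: Rabs_pos.
      nra.
  - move=> t1 It1 Wt1.
    have Hp : 0 < Rabs (W t1) by apply: Rabs_pos_lt.
    have [d [Hd H]] := deriv_cont (HdW t1 It1) Hp.
    exists d; split => // s _ Hss Ws.
    have := H s Hss; rewrite Ws Rminus_0_l Rabs_Ropp; lra.
exists (gamma t0), v; split; first by exists j.
move=> t It; exists ((gamma t j - gamma t0 j) / v j) => i.
pose phi s := gamma s i - v i / v j * gamma s j.
have Hphi : forall s, in_interval lo hi s -> derivable_pt_lim phi s 0.
  move=> s Is.
  have := derivable_pt_lim_minus _ _ s _ _ (Hgamma s Is i)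
    (derivable_pt_lim_scal _ (v i / v j) s _ (Hgamma s Is j)).
  have E : G (gamma s) i * v j - G (gamma s) j * v i = 0.
    have := @dot_zero_coord n (wv s) i (Wz s Is); rewrite /wv //.
  have -> : G (gamma s) i - v i / v j * G (gamma s) j = 0.
    have -> : G (gamma s) i - v i / v j * G (gamma s) j = (G (gamma s) i * v j - G (gamma s) j * v i) / v j by field.
    rewrite E; rewrite /Rdiv; ring.
  apply: derivable_pt_lim_ext => z; rewrite /minus_fct /mult_real_fct /phi //.
have := const_interval Hphi It0 It; rewrite /phi => E.
apply: (Rmult_eq_reg_r (v j)) => //.
have -> : (gamma t0 i + (gamma t j - gamma t0 j) / v j * v i) * v j =
   gamma t0 i * v j + (gamma t j - gamma t0 j) * v i by field.
have : gamma t i = gamma t0 i + v i / v j * (gamma t j - gamma t0 j) by lra.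
move=> ->; field.
exact: Hj.
Qed.
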